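(* Let $X$ be a Banach space as described in the context. There exists a function $f\in X$ which is not a polynomial and for which there is a sequence $p_n\in\mathcal{P}_n[\mathbb{Z}]$ with $\lim_{n\to\infty}\|f-p_n\|=0$ if and only if $\liminf_{n\to\infty}\|z^n\|=0$.
   Context: $\mathbb{D}=\{z\in\mathbb{C}:|z|<1\}$. $X$ is a complex Banach space of functions analytic in $\mathbb{D}$ whose norm $\|\cdot\|$ satisfies: (i) $\|f(\cdot\, e^{it})\|=\|f(\cdot)\|$ for all $t\in\mathbb{R}$ and $f\in X$; (ii) $\|f\|<\infty$ for every entire function $f$; (iii) for all $f\in X$ and $g\in L[0,2\pi]$, $\big\|\frac{1}{2\pi}\int_0^{2\pi} f(ze^{it})g(t)\,dt\big\|\le \frac{1}{2\pi}\int_0^{2\pi}|g(t)|\,dt\cdot\|f\|$. $\|z^n\|$ is the norm in $X$ of $z\mapsto z^n$. A complex number is called an integer if its real and imaginary parts are integers; $\mathcal{P}_n[\mathbb{Z}]$ is the set of complex polynomials of degree at most $n-1$ with integer coefficients in this sense. *)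

(* Defs.v *)
From HB Require Import structures.
From mathcomp Require Import all_boot all_order all_algebra.
From mathcomp Require Import all_classical all_reals all_analysis.
From mathcomp Require Import complex.
Import Order.TTheory GRing.Theory Num.Theory.
Import numFieldNormedType.Exports.

Set Implicit Arguments.
Unset Strict Implicit.
Unset Printing Implicit Defensive.

Local Open Scope classical_set_scope.
Local Open Scope ring_scope.

Section Defs.
Variable R : realType.

Definition cabs (z : R[i]) : R := Normc.normc z.

Definition udisc : set R[i] := [set z | cabs z < 1].

(* f and g coincide on D (elements of X are functions on D) *)
Definition eq_on_disc (f g : R[i] -> R[i]) := forall z, udisc z -> f z = g z.

(* complex differentiability (holomorphy = analyticity) on a set U *)
Definition holo_on (U : set R[i]) (f : R[i] -> R[i]) :=
  forall z, U z -> derivable (f : R[i]^o -> R[i]^o) z 1.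

Definition entire (f : R[i] -> R[i]) := holo_on setT f.

Definition expi (t : R) : R[i] := Complex (cos t) (sin t).

Definition I02pi : set R := `[0, 2 * pi]%classic.

Definition L1_02pi (g : R -> R[i]) :=
  lebesgue_measure.-integrable I02pi (EFin \o (fun t => complex.Re (g t))) /\
  lebesgue_measure.-integrable I02pi (EFin \o (fun t => complex.Im (g t))).

Definition cint02pi (h : R -> R[i]) : R[i] :=
  Complex (Rintegral lebesgue_measure I02pi (fun t => complex.Re (h t)))
          (Rintegral lebesgue_measure I02pi (fun t => complex.Im (h t))).

Definition rot_conv (f : R[i] -> R[i]) (g : R -> R[i]) : R[i] -> R[i] :=
  fun z => Complex (2 * pi)^-1 0 * cint02pi (fun t => f (z * expi t) * g t).

Definition L1norm02pi (g : R -> R[i]) : R :=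
  (2 * pi)^-1 * Rintegral lebesgue_measure I02pi (fun t => cabs (g t)).

(* X (given by its carrier inX, a set of functions considered on D, and its
   norm nrm) is a complex Banach space of functions analytic in D *)
Record analytic_banach (inX : set (R[i] -> R[i])) (nrm : (R[i] -> R[i]) -> R)
  : Prop := {
  ab_local : forall f g, eq_on_disc f g -> inX f -> inX g /\ nrm g = nrm f;
  ab_holo : forall f, inX f -> holo_on udisc f;
  ab_zero : inX (fun _ => 0);
  ab_add : forall f g, inX f -> inX g -> inX (fun z => f z + g z);
  ab_scale : forall (c : R[i]) f, inX f -> inX (fun z => c * f z);
  ab_nrm_ge0 : forall f, inX f -> 0 <= nrm f;
  ab_nrm_eq0 : forall f, inX f -> nrm f = 0 -> eq_on_disc f (fun _ => 0);
  ab_nrm_scale : forall (c : R[i]) f, inX f -> nrm (fun z => c * f z) = cabs c * nrm f;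
  ab_nrm_triangle : forall f g, inX f -> inX g ->
      nrm (fun z => f z + g z) <= nrm f + nrm g;
  ab_complete : forall u : nat -> (R[i] -> R[i]), (forall n, inX (u n)) ->
      (forall e : R, 0 < e -> exists N, forall m n, (N <= m)%N -> (N <= n)%N ->
          nrm (fun z => u m z - u n z) < e) ->
      exists f, inX f /\ (fun n => nrm (fun z => u n z - f z)) @ \oo --> (0 : R)
}.

Definition rot_invariant (inX : set (R[i] -> R[i])) (nrm : (R[i] -> R[i]) -> R) :=
  forall (t : R) f, inX f ->
    inX (fun z => f (z * expi t)) /\ nrm (fun z => f (z * expi t)) = nrm f.

(* (ii) every entire function has finite norm, i.e. belongs to X *)
Definition has_entire (inX : set (R[i] -> R[i])) := forall f, entire f -> inX f.

Definition conv_bounded (inX : set (R[i] -> R[i])) (nrm : (R[i] -> R[i]) -> R) :=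
  forall f g, inX f -> L1_02pi g ->
    inX (rot_conv f g) /\ nrm (rot_conv f g) <= L1norm02pi g * nrm f.

Definition gauss_int (c : R[i]) := exists a b : int, c = Complex a%:~R b%:~R.

(* P_n[Z] : polynomials of degree at most n-1 with Gaussian-integer coefficients *)
Definition PnZ (n : nat) (p : {poly R[i]}) :=
  (size p <= n)%N /\ forall k, gauss_int p`_k.

Definition is_poly_on_disc (f : R[i] -> R[i]) :=
  exists q : {poly R[i]}, eq_on_disc f (fun z => q.[z]).

End Defs.

(* Main.v *)
Require Import Defs.
From HB Require Import structures.
From mathcomp Require Import all_boot all_order all_algebra.
From mathcomp Require Import all_classical all_reals all_analysis.
From mathcomp Require Import complex.
From mathcomp Require Import ring lra zify.
Import Order.TTheory GRing.Theory Num.Theory.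
Import numFieldNormedType.Exports.
Local Open Scope classical_set_scope.
Local Open Scope ring_scope.

Section Expi.
Variable R : realType.

Lemma expi0 : expi (0 : R) = 1.
Proof. by rewrite /expi cos0 sin0. Qed.

Lemma expiD (a b : R) : expi (a + b) = expi a * expi b.
Proof. by rewrite /expi cosD sinD /= ; congr Complex; ring. Qed.

Lemma expiX (t : R) n : expi t ^+ n = expi (n%:R * t).
Proof.
elim: n => [|n IH]; first by rewrite expr0 mul0r expi0.
by rewrite exprSr IH -expiD -natr1 mulrDl mul1r.
Qed.

Lemma cabs_expi (t : R) : cabs (expi t) = 1.
Proof. by rewrite /cabs /expi /= cos2Dsin2 sqrtr1. Qed.

Lemma expi2pi : expi (2 * pi : R) = 1.
Proof. by rewrite /expi mulr_natl cos2pi sin2pi. Qed.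

Lemma expi_ne1 (y : R) : 0 < y < pi -> expi (2 * y) != 1.
Proof.
move=> /sin_gt0_pi sy; apply/negP => /eqP.
rewrite (_ : 2 * y = y + y); last by rewrite mulr2n mulrDl mul1r. rewrite expiD /expi /= => -[h _].
have := cos2Dsin2 y; move: h; rewrite !expr2 => h1 h2.
have : sin y * sin y = 0 by lra.
by move/eqP; rewrite mulf_eq0 orbb => /eqP sy0; rewrite sy0 ltxx in sy.
Qed.

End Expi.


Section Roots.
Variable R : realType.
Variable N : nat.
Hypothesis N0 : (0 < N)%N.

Definition tN : R := 2 * (pi / N%:R).
Definition om : R[i] := expi tN.

Lemma omX m : om ^+ m = expi (2 * (m%:R * (pi / N%:R))).
Proof. by rewrite /om expiX /tN; congr expi; ring. Qed.

Lemma omN : om ^+ N = 1.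
Proof.
rewrite omX [_ * (pi / _)]mulrC -mulrA mulVf ?mulr1 ?expi2pi //.
by rewrite pnatr_eq0 -lt0n.
Qed.

Lemma om_ne1 m : (0 < m < N)%N -> om ^+ m != 1.
Proof.
move=> /andP[m0 mN]; rewrite omX; apply: expi_ne1.
have Np : 0 < N%:R :> R by rewrite ltr0n.
apply/andP; split.
  by apply: mulr_gt0; [rewrite ltr0n| apply: divr_gt0 => //; exact: pi_gt0].
rewrite mulrA ltr_pdivrMr // mulrC ltr_pM2l ?ltr_nat //; exact: pi_gt0.
Qed.

Lemma om_neq0 : om != 0.
Proof.
apply/eqP => h; have := @cabs_expi R tN; rewrite -/om h /cabs.
by rewrite (Normc.normc0 R) => /eqP; rewrite eq_sym oner_eq0.
Qed.

Lemma om_inj l k : (l < N)%N -> (k < N)%N -> om ^+ l = om ^+ k -> l = k.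
Proof.
wlog lk : l k / (k <= l)%N.
  move=> W lN kN h; case: (leqP k l) => H; first exact: W.
  by symmetry; apply: W => //; exact: ltnW.
move=> lN kN h; apply/eqP; rewrite eqn_leq lk andbT leqNgt; apply/negP => kl.
have := @om_ne1 (l - k)%N; rewrite subn_gt0 kl /=.
have -> : (l - k < N)%N by apply: leq_ltn_trans lN; exact: leq_subr.
move=> /(_ isT); apply/negP; rewrite negbK.
have : om ^+ (l - k) * om ^+ k = om ^+ k by rewrite -exprD subnK // -h.
move/eqP; rewrite -subr_eq0 -{2}(mul1r (om ^+ k)) -mulrBl mulf_eq0 subr_eq0.
by rewrite expf_eq0 (negbTE om_neq0) andbF orbF.
Qed.

Lemma rootsum (x : R[i]) n : x ^+ n = 1 -> x != 1 -> \sum_(j < n) x ^+ j = 0.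
Proof.
move=> xn x1; have := subrX1 x n; rewrite xn subrr => /esym/eqP.
by rewrite mulf_eq0 subr_eq0 (negbTE x1) => /eqP.
Qed.

Lemma avg_coef (P : {poly R[i]}) k z : (size P <= N)%N -> (k < N)%N ->
  \sum_(j < N) ((om ^+ k)^-1) ^+ j * P.[z * om ^+ j] = N%:R * (P`_k * z ^+ k).
Proof.
move=> hN hk.
under eq_bigr => j _ do rewrite (horner_coef_wide _ hN) mulr_sumr.
rewrite exchange_big /=.
under eq_bigr => l _.
  have -> : \sum_(i < N) (om ^+ k)^-1 ^+ i * (P`_l * (z * om ^+ i) ^+ l) =
     P`_l * z ^+ l * \sum_(i < N) ((om ^+ k)^-1 * om ^+ l) ^+ i.
    rewrite mulr_sumr; apply: eq_bigr => i _.
    by rewrite !exprMn -!exprM mulnC exprM; ring.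
  over.
rewrite (bigD1 (Ordinal hk)) //= [X in _ + X]big1 ?addr0.
  rewrite mulVf ?expf_neq0 ?om_neq0 //.
  under eq_bigr do rewrite expr1n.
  by rewrite sumr_const card_ord mulrC mulr_natl.
move=> l /eqP lk; rewrite rootsum ?mulr0 //.
  rewrite exprMn -!exprM mulnC !exprM omN expr1n mulr1 exprVn -exprM mulnC exprM omN expr1n invr1.
  done.
apply/negP => /eqP h; apply: lk; apply/val_inj/om_inj => //=.
apply: (mulfI (x := (om ^+ k)^-1)); first by rewrite invr_eq0 expf_neq0 ?om_neq0.
by rewrite h mulVf // expf_neq0 ?om_neq0.
Qed.

End Roots.


Section Ban.
Variable R : realType.
Variables (inX : set (R[i] -> R[i])) (nrm : (R[i] -> R[i]) -> R).
Hypothesis AB : analytic_banach inX nrm.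
Hypothesis ROT : rot_invariant inX nrm.
Hypothesis ENT : has_entire inX.

Lemma nrm_ext (f g : R[i] -> R[i]) : (forall z, f z = g z) -> nrm f = nrm g.
Proof. by move=> h; congr nrm; apply/funext. Qed.

Lemma inX_ext (f g : R[i] -> R[i]) : (forall z, f z = g z) -> inX f -> inX g.
Proof. by move=> h; rewrite (_ : f = g) //; apply/funext. Qed.

Lemma cabs0 : cabs (0 : R[i]) = 0.
Proof. exact: Normc.normc0. Qed.

Lemma nrm0 : nrm (fun _ => 0) = 0.
Proof.
have h := ab_nrm_scale AB 0 (ab_zero AB).
by rewrite cabs0 !mul0r in h.
Qed.

Lemma inX_sum (I : Type) (s : seq I) (F : I -> R[i] -> R[i]) :
  (forall i, inX (F i)) ->
  inX (fun z => \sum_(i <- s) F i z) /\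
  nrm (fun z => \sum_(i <- s) F i z) <= \sum_(i <- s) nrm (F i).
Proof.
move=> FX; elim: s => [|a s [IH1 IH2]].
  rewrite (_ : (fun z => _) = (fun _ => 0)); last by apply/funext => z; rewrite big_nil.
  rewrite big_nil nrm0; split; [exact: (ab_zero AB)| exact: lexx].
rewrite (_ : (fun z => _) = (fun z => F a z + \sum_(i <- s) F i z)); last first.
  by apply/funext => z; rewrite big_cons.
split; first exact: (ab_add AB).
rewrite big_cons; apply: le_trans (ab_nrm_triangle AB (FX a) IH1) _.
by rewrite lerD2l.
Qed.

Lemma inX_X n : inX (fun z => z ^+ n).
Proof. by apply: ENT => z _; exact: exprn_derivable. Qed.

Lemma inX_poly (P : {poly R[i]}) : inX (fun z => P.[z]).
Proof.
apply: (@inX_ext (fun z => \sum_(i < size P) P`_i * z ^+ i)).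
  by move=> z; rewrite horner_coef.
by case: (@inX_sum _ (index_enum 'I_(size P)) (fun i z => P`_i * z ^+ i) _) => // i;
  apply: ab_scale AB _ _ (inX_X _).
Qed.

Lemma cabsM (x y : R[i]) : cabs (x * y) = cabs x * cabs y.
Proof. exact: Normc.normcM. Qed.

Lemma cabsV (x : R[i]) : cabs (x^-1) = (cabs x)^-1.
Proof. exact: Normc.normcV. Qed.

Lemma cabsX (x : R[i]) n : cabs (x ^+ n) = cabs x ^+ n.
Proof.
elim: n => [|n IH]; first by rewrite !expr0 /cabs Normc.normc1.
by rewrite !exprS cabsM IH.
Qed.

Lemma cabs_nat n : cabs (n%:R : R[i]) = n%:R.
Proof. by rewrite /cabs (@normcMn R) Normc.normc1. Qed.

Lemma coef_bound (P : {poly R[i]}) k :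
  cabs P`_k * nrm (fun z => z ^+ k) <= nrm (fun z => P.[z]).
Proof.
set N := maxn (size P) k.+1.
have N0 : (0 < N)%N by rewrite leq_max ltnS leq0n orbT.
have hN : (size P <= N)%N by rewrite leq_maxl.
have hk : (k < N)%N by rewrite leq_max leqnn orbT.
pose c j := ((om R N ^+ k)^-1) ^+ j.
have Nne0 : (N%:R : R[i]) != 0 by rewrite pnatr_eq0 -lt0n.
have eA : (fun z => (N%:R)^-1 * \sum_(j < N) c j * P.[z * om R N ^+ j])
        = (fun z => P`_k * z ^+ k).
  by apply/funext => z; rewrite /c avg_coef // mulKf.
have Fx : forall j : 'I_N, inX (fun z => c j * P.[z * om R N ^+ j]).
  move=> j; apply: ab_scale AB _ _ _.
  by rewrite /om expiX; case: (ROT (j%:R * tN R N) _ (inX_poly P)).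
have Fn : forall j : 'I_N, nrm (fun z => c j * P.[z * om R N ^+ j]) = nrm (fun z => P.[z]).
  move=> j; have Pj : inX (fun z => P.[z * om R N ^+ j]).
    by rewrite /om expiX; case: (ROT (j%:R * tN R N) _ (inX_poly P)).
  have /= -> := ab_nrm_scale AB (c j) Pj.
  have -> : cabs (c j) = 1.
    rewrite /c /= cabsX cabsV cabsX /om cabs_expi !expr1n invr1.
    exact: expr1n.
  rewrite mul1r /om expiX.
  by case: (ROT (j%:R * tN R N) _ (inX_poly P)).
have [Sx Sn] := @inX_sum _ (index_enum 'I_N) (fun j z => c j * P.[z * om R N ^+ j]) Fx.
have := ab_nrm_scale AB (N%:R^-1) Sx.
rewrite /= eA (ab_nrm_scale AB _ (inX_X k)) => ->.
rewrite cabsV cabs_nat.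
apply: le_trans (_ : N%:R^-1 * (N%:R * nrm (fun z => P.[z])) <= _).
  rewrite ler_pM2l ?invr_gt0 ?ltr0n //.
  apply: le_trans Sn _.
  by under eq_bigr do rewrite Fn; rewrite sumr_const card_ord mulr_natl.
by rewrite mulKf // pnatr_eq0 -lt0n.
Qed.
End Ban.
Arguments inX_ext {R inX}.
Arguments nrm_ext {R nrm}.
Arguments inX_sum {R inX nrm}.
Arguments inX_X {R inX}.
Arguments inX_poly {R inX nrm}.
Arguments coef_bound {R inX nrm}.



Section Gauss.
Variable R : realType.

Lemma gauss0 : gauss_int (0 : R[i]).
Proof. by exists 0, 0. Qed.

Lemma gaussD (a b : R[i]) : gauss_int a -> gauss_int b -> gauss_int (a + b).
Proof.
move=> [x [y ->]] [u [v ->]]; exists (x + u), (y + v).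
by rewrite !rmorphD.
Qed.

Lemma gaussN (a : R[i]) : gauss_int a -> gauss_int (- a).
Proof. by move=> [x [y ->]]; exists (- x), (- y); rewrite !rmorphN. Qed.

Lemma gaussB (a b : R[i]) : gauss_int a -> gauss_int b -> gauss_int (a - b).
Proof. by move=> ha hb; apply: gaussD => //; exact: gaussN. Qed.

Lemma gauss_nat n : gauss_int (n%:R : R[i]).
Proof.
elim: n => [|n IH]; first exact: gauss0.
rewrite -natr1; apply: gaussD => //; by exists 1, 0.
Qed.

Lemma int_sq_small (a : int) : (a%:~R : R) ^+ 2 < 1 -> a = 0.
Proof.
move=> h; have : (a ^+ 2 < 1)%R.
  by rewrite -(ltr_int R) rmorphXn.
rewrite expr2 => h2; nia.
Qed.

Lemma gauss_small (c : R[i]) : gauss_int c -> cabs c < 1 -> c = 0.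
Proof.
move=> [a [b ->]]; rewrite /cabs /= => h.
have h2 : (a%:~R : R) ^+ 2 + (b%:~R : R) ^+ 2 < 1.
  rewrite ltNge; apply/negP => H; move: h; apply/negP.
  by rewrite -leNgt -[X in X <= _]sqrtr1 ler_sqrt ?addr_ge0 ?sqr_ge0.
have ha : (a%:~R : R) ^+ 2 < 1.
  by apply: le_lt_trans h2; rewrite lerDl sqr_ge0.
have hb : (b%:~R : R) ^+ 2 < 1.
  by apply: le_lt_trans h2; rewrite lerDr sqr_ge0.
by rewrite (int_sq_small _ ha) (int_sq_small _ hb).
Qed.

End Gauss.


Section Liminf.
Variable R : realType.
Variable u : nat -> R.

Let v := fun n => (u n)%:E.

Lemma limn_einfE : limn_einf v = ereal_sup (range (einfs v)).
Proof. by rewrite limn_einf_lim; apply: cvg_lim => //; exact: cvg_einfs_sup. Qed.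

Lemma liminf0_small : limn_einf v = 0%E ->
  forall e, 0 < e -> forall K, exists2 k, (K <= k)%N & u k < e.
Proof.
rewrite limn_einfE => h e e0 K.
have : (einfs v K < e%:E)%E.
  apply: (le_lt_trans (y := 0%E)); last by rewrite lte_fin.
  by rewrite -h; apply: ereal_sup_ubound; exists K.
move=> /ereal_inf_lt [y [k /= Kk <-]]; rewrite lte_fin => uk.
by exists k.
Qed.

Lemma small_liminf0 : (forall n, 0 <= u n) ->
  (forall e, 0 < e -> forall K, exists2 k, (K <= k)%N & u k < e) ->
  limn_einf v = 0%E.
Proof.
move=> u0 h; rewrite limn_einfE.
have E : forall K, einfs v K = 0%E.
  move=> K; apply/eqP; rewrite eq_le; apply/andP; split.
    apply/lee_addgt0Pr => e e0; rewrite add0e.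
    have [k Kk uk] := h e e0 K.
    apply: (le_trans (y := v k)); last by rewrite lee_fin ltW.
    by apply: ereal_inf_lbound; exists k.
  by apply: le_ereal_inf_tmp => _ [k _ <-]; rewrite lee_fin.
rewrite (_ : range (einfs v) = [set 0%E]) ?ereal_sup1 //.
apply/seteqP; split => x /=.
  by move=> [K _ <-]; rewrite E.
by move=> ->; exists 0%N => //; rewrite E.
Qed.

End Liminf.


Section Eps.
Variable R : realType.

Lemma cvg0_eps (a : nat -> R) : a @ \oo --> (0 : R) ->
  forall e, 0 < e -> exists N, forall n, (N <= n)%N -> a n < e.
Proof.
move=> /cvgrPdist_lt h e e0; have [N _ HN] := h e e0.
exists N => n Nn; have := HN n Nn; rewrite sub0r normrN.
exact: le_lt_trans (ler_norm _).
Qed.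

Lemma eps_cvg0 (a : nat -> R) : (forall n, 0 <= a n) ->
  (forall e, 0 < e -> exists N, forall n, (N <= n)%N -> a n < e) ->
  a @ \oo --> (0 : R).
Proof.
move=> a0 h; apply/cvgrPdist_lt => e e0; have [N HN] := h e e0.
exists N => // n Nn; rewrite sub0r normrN ger0_norm //; exact: HN.
Qed.

Lemma le0_eps (x : R) : (forall e, 0 < e -> x < e) -> x <= 0.
Proof. by move=> h; case: (ltrP 0 x) => // xp; have := h x xp; rewrite ltxx. Qed.

Lemma half_small e : 0 < e -> exists N, forall n, (N <= n)%N -> 2 * (2^-1 : R) ^+ n < e.
Proof.
move=> e0; have : (fun n => (2^-1 : R) ^+ n) @ \oo --> (0:R).
  apply: cvg_expr; rewrite ger0_norm ?invr_ge0 ?ler0n //.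
  by rewrite invf_lt1 ?ltr0n // ltr1n.
move/cvg0_eps => /(_ (e / 2)) [|N HN]; first by rewrite divr_gt0.
exists N => n /HN; lra.
Qed.

Lemma geom_sum k d : \sum_(k <= j < k + d) (2^-1 : R) ^+ j = 2 * ((2^-1) ^+ k - (2^-1) ^+ (k + d)).
Proof.
elim: d => [|d IH]; first by rewrite addn0 big_geq // subrr mulr0.
rewrite addnS big_nat_recr ?leq_addr //= IH exprS; field; exact: isT.
Qed.

Lemma geom_le k m : \sum_(k <= j < m) (2^-1 : R) ^+ j <= 2 * (2^-1) ^+ k.
Proof.
have h0 : 0 <= (2^-1 : R) by rewrite invr_ge0 ler0n.
case: (leqP k m) => km.
  rewrite -(subnKC km) (geom_sum k (m - k)) ler_pM2l ?ltr0n // gerBl; exact: exprn_ge0.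
rewrite big_geq; last exact: ltnW.
apply: mulr_ge0; [by rewrite ler0n | exact: exprn_ge0].
Qed.

End Eps.
Arguments cvg0_eps {R}.
Arguments eps_cvg0 {R}.
Arguments le0_eps {R}.
Arguments half_small {R}.
Arguments geom_le {R}.



Section Fwd.
Variable R : realType.
Variables (inX : set (R[i] -> R[i])) (nrm : (R[i] -> R[i]) -> R).
Hypothesis AB : analytic_banach inX nrm.
Hypothesis ROT : rot_invariant inX nrm.
Hypothesis ENT : has_entire inX.

Lemma cabsN1 : cabs (-1 : R[i]) = 1.
Proof. by rewrite /cabs (@normcN R) Normc.normc1. Qed.

Lemma inX_sub g h : inX g -> inX h -> inX (fun z => g z - h z).
Proof.
move=> gX hX; apply: (inX_ext (fun z => g z + (-1) * h z)).
  by move=> z; rewrite mulN1r.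
by apply: (ab_add AB) => //; exact: (ab_scale AB).
Qed.

Lemma nrm_sub_le g h : inX g -> inX h -> nrm (fun z => g z - h z) <= nrm g + nrm h.
Proof.
move=> gX hX.
have -> : (fun z => g z - h z) = (fun z => g z + (fun z => -1 * h z) z).
  by apply/funext => z; rewrite mulN1r.
apply: le_trans (ab_nrm_triangle AB gX (ab_scale AB (-1) hX)) _.
by rewrite (ab_nrm_scale AB (-1) hX) cabsN1 mul1r.
Qed.

Lemma udisc_half : udisc (2^-1 : R[i]).
Proof.
change (cabs (2^-1 : R[i]) < 1); rewrite cabsV (cabs_nat _ 2) invf_lt1 ?ltr0n //.
by rewrite ltr1n.
Qed.

Lemma nrmX_pos k : 0 < nrm (fun z : R[i] => z ^+ k).
Proof.
rewrite lt_def (ab_nrm_ge0 AB (inX_X ENT k)) andbT; apply/eqP => h.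
have := ab_nrm_eq0 AB (inX_X ENT k) h udisc_half => /= /eqP.
by rewrite expf_eq0 invr_eq0 pnatr_eq0 andbF.
Qed.

Lemma fwd f (p : nat -> {poly R[i]}) : inX f -> ~ is_poly_on_disc f ->
  (forall n, PnZ n (p n)) ->
  (fun n => nrm (fun z => f z - (p n).[z])) @ \oo --> (0 : R) ->
  forall e, 0 < e -> forall K, exists2 k, (K <= k)%N & nrm (fun z => z ^+ k) < e.
Proof.
move=> fX nP pZ pc e e0 K; apply: contrapT => H.
have Hge : forall k, (K <= k)%N -> e <= nrm (fun z => z ^+ k).
  move=> k Kk; rewrite leNgt; apply/negP => lt; apply: H; by exists k.
have [d d0 Hd] : exists2 d, 0 < d & forall k, d <= nrm (fun z => z ^+ k).
  suff [d d0 Hd] : exists2 d, 0 < d & forall k, (k < K)%N -> d <= nrm (fun z => z ^+ k).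
    exists (Num.min d e); first by rewrite lt_min d0 e0.
    move=> k; case: (ltnP k K) => kK; rewrite ge_min.
      by rewrite Hd.
    by rewrite Hge ?orbT.
  elim: (K) => [|K' [d d0 Hd]]; first by exists 1.
  exists (Num.min d (nrm (fun z => z ^+ K'))); first by rewrite lt_min d0 nrmX_pos.
  move=> k; rewrite ltnS leq_eqVlt => /orP [/eqP ->|kK]; rewrite ge_min.
    by rewrite lexx orbT.
  by rewrite Hd.
have Z : forall Q : {poly R[i]}, (forall k, gauss_int Q`_k) ->
    nrm (fun z => Q.[z]) < d -> Q = 0.
  move=> Q QZ Qd; apply/polyP => k; rewrite coef0; apply: gauss_small => //.
  have h1 := coef_bound AB ROT ENT Q k; have h2 := Hd k; have h3 := nrmX_pos k.
  rewrite ltNge; apply/negP => c1; have := ler_wpM2r (ltW h3) c1; rewrite mul1r.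
  lra.
have fpX : forall n, inX (fun z => f z - (p n).[z]).
  by move=> n; apply: inX_sub => //; exact: (inX_poly AB ENT).
have [N HN] := cvg0_eps _ pc _ (divr_gt0 d0 (ltr0n _ 2)).
have pe : forall n, (N <= n)%N -> p n = p N.
  move=> n Nn; apply/eqP; rewrite -subr_eq0; apply/eqP; apply: Z.
    move=> k; rewrite coefB; apply: gaussB; [exact: (pZ n).2 | exact: (pZ N).2].
  have -> : (fun z => (p n - p N).[z]) =
     (fun z => (fun z => f z - (p N).[z]) z - (fun z => f z - (p n).[z]) z).
    by apply/funext => z /=; rewrite hornerD hornerN; ring.
  apply: le_lt_trans; first exact: (nrm_sub_le _ _ (fpX N) (fpX n)).
  have := HN N (leqnn N); have := HN n Nn; lra.
have n0 : nrm (fun z => f z - (p N).[z]) = 0.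
  apply/le_anti; rewrite (ab_nrm_ge0 AB (fpX N)) andbT.
  apply: le0_eps => e' e'0; have [N' HN'] := cvg0_eps _ pc _ e'0.
  by have := HN' (maxn N N') (leq_maxr _ _); rewrite pe // leq_maxl.
apply: nP; exists (p N) => z zD.
have := ab_nrm_eq0 AB (fpX N) n0 zD => /= /eqP.
by rewrite subr_eq0 => /eqP.
Qed.

End Fwd.
Arguments inX_sub {R inX nrm} AB {g h}.
Arguments nrm_sub_le {R inX nrm} AB {g h}.
Arguments nrmX_pos {R inX nrm} AB ENT k.
Arguments fwd {R inX nrm} AB ROT ENT {f p}.


Fixpoint iseq (h : nat -> nat) (j : nat) : nat :=
  match j with 0 => h 0%N | j'.+1 => h (iseq h j').+1 end.

Section Iseq.
Variable h : nat -> nat.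
Hypothesis hh : forall K, (K <= h K)%N.
Let ns := iseq h.

Lemma ns_lt j : (ns j < ns j.+1)%N.
Proof. exact: hh. Qed.

Lemma ns_mono i j : (i < j)%N -> (ns i < ns j)%N.
Proof.
elim: j => // j IH; rewrite ltnS leq_eqVlt => /orP[/eqP->|/IH lt].
  exact: ns_lt.
exact: ltn_trans lt (ns_lt j).
Qed.

Lemma ns_le i j : (i <= j)%N -> (ns i <= ns j)%N.
Proof. by rewrite leq_eqVlt => /orP[/eqP->//|/ns_mono/ltnW]. Qed.

Lemma ns_ge j : (j <= ns j)%N.
Proof. elim: j => // j IH; exact: leq_ltn_trans IH (ns_lt j). Qed.

Lemma ns_inj : injective ns.
Proof.
move=> i j e; apply/eqP; rewrite eqn_leq; apply/andP; split; rewrite leqNgt;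
  apply/negP => /ns_mono; by rewrite e ltnn.
Qed.
End Iseq.

Section Bwd.
Variable R : realType.
Variables (inX : set (R[i] -> R[i])) (nrm : (R[i] -> R[i]) -> R).
Hypothesis AB : analytic_banach inX nrm.
Hypothesis ROT : rot_invariant inX nrm.
Hypothesis ENT : has_entire inX.

Let half : R := 2^-1.

Lemma half_ge0 : 0 <= half.
Proof. by rewrite invr_ge0 ler0n. Qed.

Lemma half_gt0 : 0 < half.
Proof. by rewrite invr_gt0 ltr0n. Qed.

Lemma nrm_sumX (I : Type) (s : seq I) (g : I -> nat) (b : I -> R) :
  (forall i, nrm (fun z => z ^+ g i) <= b i) ->
  inX (fun z => (\sum_(i <- s) 'X^(g i)).[z]) /\
  nrm (fun z => (\sum_(i <- s) 'X^(g i)).[z]) <= \sum_(i <- s) b i.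
Proof.
move=> hb.
have -> : (fun z : R[i] => (\sum_(i <- s) 'X^(g i)).[z]) = (fun z : R[i] => \sum_(i <- s) (fun i (z : R[i]) => z ^+ g i) i z).
  by apply/funext => z; rewrite horner_sum; apply: eq_bigr => i _; rewrite hornerXn.
have [X1 X2] := inX_sum AB _ s (fun i z => z ^+ g i) (fun i => inX_X ENT (g i)).
split => //; apply: le_trans X2 _; exact: ler_sum.
Qed.

Lemma nrm_polyN (Q : {poly R[i]}) : nrm (fun z => (- Q).[z]) = nrm (fun z => Q.[z]).
Proof.
have h := ab_nrm_scale AB (-1) (inX_poly AB ENT Q).
rewrite cabsN1 mul1r /= in h; rewrite -h; apply: nrm_ext => z.
by rewrite hornerN mulN1r.
Qed.

Lemma bwd : (forall e, 0 < e -> forall K, exists2 k, (K <= k)%N & nrm (fun z => z ^+ k) < e) ->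
  exists f, inX f /\ ~ is_poly_on_disc f /\
      exists p : nat -> {poly R[i]}, (forall n, PnZ n (p n)) /\
        (fun n => nrm (fun z => f z - (p n).[z])) @ \oo --> (0 : R).
Proof.
move=> H.
have [h hh] : {h : nat -> nat & forall K, (K <= h K)%N /\ nrm (fun z => z ^+ h K) < half ^+ K}.
  apply: (@choice nat nat (fun K k => (K <= k)%N /\ nrm (fun z => z ^+ k) < half ^+ K)) => K.
  have [k Kk hk] := H (half ^+ K) (exprn_gt0 _ half_gt0) K.
  by exists k.
have hh1 : forall K, (K <= h K)%N by move=> K; exact: (hh K).1.
set ns := iseq h.
have nsb : forall j, nrm (fun z => z ^+ ns j) <= half ^+ j.
  case => [|j]; first exact: ltW (hh 0%N).2.
  apply: le_trans (ltW (hh (ns j).+1).2) _.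
  apply: ler_wiXn2l; [exact: half_ge0 | by rewrite invf_le1 ?ltr0n ?ler1n |].
  by rewrite ltnS; apply: ns_ge.
pose PS k : {poly R[i]} := \sum_(j < k) 'X^(ns j).
pose u k := fun z => (PS k).[z].
have uX : forall k, inX (u k) by move=> k; exact: inX_poly AB ENT (PS k).
have PSdiff : forall k m, (k <= m)%N -> PS m - PS k = \sum_(k <= j < m) 'X^(ns j).
  move=> k m km; rewrite /PS -!(big_mkord (fun _ => true) (fun j => 'X^(ns j))) (big_cat_nat (leq0n k) km) /=.
  by rewrite addrAC subrr add0r.
have PSb : forall k m, (k <= m)%N -> nrm (fun z => (PS m - PS k).[z]) <= 2 * half ^+ k.
  move=> k m km; rewrite PSdiff //.
  have [_ X2] := nrm_sumX _ (index_iota k m) ns (fun j => half ^+ j) nsb.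
  exact: le_trans X2 (geom_le k m).
have E : forall a b, (fun z => u a z - u b z) = (fun z => (PS a - PS b).[z]).
  by move=> a b; apply/funext => z; rewrite /u hornerD hornerN.
have cauchy : forall e : R, 0 < e -> exists N, forall m n, (N <= m)%N -> (N <= n)%N ->
    nrm (fun z => u m z - u n z) < e.
  move=> e e0; have [N HN] := half_small _ e0.
  exists N => m n Nm Nn; rewrite E; case: (leqP n m) => nm.
    exact: le_lt_trans (PSb _ _ nm) (HN n Nn).
  rewrite -opprB nrm_polyN; exact: le_lt_trans (PSb _ _ (ltnW nm)) (HN m Nm).
have [f [fX fc]] := ab_complete AB uX cauchy.
exists f; split => //; split.
  move=> [q Hq].
  set j := size q; set m := ns j.
  have qm : q`_m = 0 by apply: nth_default; apply: ns_ge.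
  have Hb : forall k, (j < k)%N -> nrm (fun z => z ^+ m) <= nrm (fun z => u k z - f z).
    move=> k jk.
    have cm : (PS k - q)`_m = 1.
      rewrite coefB qm subr0 /PS coef_sum (bigD1 (Ordinal jk)) //= coefXn eqxx big1 ?addr0 //.
      move=> i /eqP ne; rewrite coefXn; case: eqP => // /(ns_inj _ hh1) e.
      by exfalso; apply: ne; apply: val_inj.
    have := coef_bound AB ROT ENT (PS k - q) m; rewrite cm /cabs (Normc.normc1 R) mul1r.
    have [_ ->] : inX (fun z => (PS k - q).[z]) /\
        nrm (fun z => (PS k - q).[z]) = nrm (fun z => u k z - f z).
      apply: (@ab_local _ _ _ AB (fun z => u k z - f z)) (inX_sub AB (uX k) fX).
      by move=> z zD; rewrite hornerD hornerN /u (Hq z zD).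
    done.
  have : nrm (fun z => z ^+ m) <= 0.
    apply: le0_eps => e e0; have [N HN] := cvg0_eps _ fc _ e0.
    apply: le_lt_trans (Hb (maxn N j.+1) _) (HN _ (leq_maxl _ _)).
    exact: leq_maxr.
  by rewrite leNgt (nrmX_pos AB ENT).
pose p n : {poly R[i]} := \sum_(j < n | (ns j < n)%N) 'X^(ns j).
exists p; split.
  move=> n; split.
    apply: (big_ind (fun q : {poly R[i]} => (size q <= n)%N)).
    - by rewrite size_poly0.
    - by move=> x y hx hy; apply: leq_trans (size_polyD x y) _; rewrite geq_max hx hy.
    - by move=> j hj; rewrite size_polyXn.
  move=> k; rewrite coef_sum; apply: (big_ind (@gauss_int R)).
  - exact: gauss0.
  - exact: gaussD.
  - by move=> j _; rewrite coefXn; apply: gauss_nat.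
have e2 : forall e : R, 0 < e -> 0 < e / 2 by move=> e e0; rewrite divr_gt0.
apply: eps_cvg0 => [n|e e0].
  by apply: (ab_nrm_ge0 AB); apply: (inX_sub AB fX (inX_poly AB ENT (p n))).
have [N1 HN1] := cvg0_eps _ fc _ (e2 e e0).
have [K HK] := half_small _ (e2 e e0).
exists (maxn N1 (ns K).+1) => n; rewrite geq_max => /andP[N1n Kn].
have Kn' : (K.+1 <= n)%N by apply: leq_ltn_trans Kn; apply: ns_ge.
have -> : (fun z => f z - (p n).[z]) =
    (fun z => (fun z => (PS n - p n).[z]) z - (fun z => u n z - f z) z).
  by apply/funext => z /=; rewrite /u hornerD hornerN; ring.
apply: le_lt_trans; first exact: (nrm_sub_le AB (inX_poly AB ENT _) (inX_sub AB (uX n) fX)).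
have := HN1 n N1n; suff : nrm (fun z => (PS n - p n).[z]) < e / 2 by lra.
have -> : PS n - p n = \sum_(j < n | ~~ (ns j < n)%N) 'X^(ns j).
  by rewrite /PS (bigID (fun j : 'I_n => (ns j < n)%N)) /= addrAC subrr add0r.
rewrite -big_filter.
have [_ X2] := nrm_sumX _ [seq j : 'I_n <- index_enum 'I_n | ~~ (ns j < n)%N] (fun j : 'I_n => ns j)
   (fun j : 'I_n => half ^+ j) (fun j : 'I_n => nsb j).
apply: le_lt_trans X2 _; rewrite big_filter.
apply: le_lt_trans (HK K.+1 (leqnSn K)); apply: le_trans (geom_le K.+1 n).
rewrite big_mkcond /= -(big_mkord (fun _ => true) (fun j => if ~~ (ns j < n)%N then half ^+ j else 0)).
rewrite (big_cat_nat (leq0n K.+1) Kn') /=.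
rewrite big_nat_cond big1 ?add0r.
  apply: ler_sum => j _; case: ifP => _ //; exact: exprn_ge0 half_ge0.
move=> j /andP[/andP[_ jK] _]; rewrite ifF //; apply/negbF.
apply: leq_ltn_trans Kn; exact: ns_le.
Qed.
End Bwd.

Theorem theorem5p5 (R : realType) (inX : set (R[i] -> R[i]))
    (nrm : (R[i] -> R[i]) -> R) :
  analytic_banach inX nrm ->
  rot_invariant inX nrm ->
  has_entire inX ->
  conv_bounded inX nrm ->
  ((exists f, inX f /\ ~ is_poly_on_disc f /\
      exists p : nat -> {poly R[i]}, (forall n, PnZ n (p n)) /\
        (fun n => nrm (fun z => f z - (p n).[z])) @ \oo --> (0 : R))
   <-> limn_einf (fun n => (nrm (fun z => z ^+ n))%:E) = 0%E).
Proof.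
move=> AB ROT ENT _; split.
  move=> [f [fX [nP [p [pZ pc]]]]].
  apply: small_liminf0; first by move=> n; apply: (ab_nrm_ge0 AB); exact: inX_X.
  exact: (fwd AB ROT ENT fX nP pZ pc).
move=> H; apply: (@bwd R inX nrm AB ROT ENT).
exact: liminf0_small H.
Qed.
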